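(* For all integers $n\ge 2$ and $k\ge 1$, the number of edges of $H_{n,k}$ is $$|E_{n,k}|=\frac{3}{2}n^{k+1}-(n-1)^{k+1}-2n^k-\frac{n}{2}+1 .$$
   Context: Let $n\ge 2$ and $k\ge 1$ be integers. $H_{n,k}$ is the simple undirected graph with vertex set $V_{n,k}=\mathbb{Z}_n^k$ (so $|V_{n,k}|=n^k$), whose vertices are written as strings $x_1x_2\ldots x_k$ with $x_j\in\mathbb{Z}_n=\{0,1,\ldots,n-1\}$. Two distinct vertices are adjacent if and only if they are related by one of the following rules. For $i=0$ the prefix $x_1\ldots x_i$ is empty, and ''$0\ldots0$'' denotes a string of zeros completing the word to length $k$. (R1) $x_1\ldots x_{k-1}x_k\sim x_1\ldots x_{k-1}y_k$ whenever $y_k\neq x_k$. (R2) For $0\le i\le k-2$: $x_1\ldots x_i0\ldots0\sim x_1\ldots x_ix_{i+1}\ldots x_k$ whenever $x_j\neq 0$ for all $i+1\le j\le k$. (R3) For $1\le i\le k-1$: $x_1\ldots x_{i-1}x_i0\ldots0\sim x_1\ldots x_{i-1}y_i0\ldots0$ whenever $x_i,y_i\neq0$ and $x_i\ne y_i$. In particular, $H_{n,1}$ is the complete graph $K_n$. $E_{n,k}$ denotes the edge set of $H_{n,k}$. *)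

(* Defs.v *)
From mathcomp Require Import all_boot all_order all_algebra.
Set Implicit Arguments. Unset Strict Implicit. Unset Printing Implicit Defensive.

(* Vertices of H_{n,k}: words x_1 ... x_k over Z_n = {0,...,n-1}, encoded as
   k-tuples of ordinals 'I_n; the letter x_j (1-indexed) is
   [letter x (j-1)] (0-indexed position). *)
Definition vtx (n k : nat) := (k.-tuple 'I_n).

Definition letter n k (x : vtx n k) (p : nat) : nat := nth 0 (map val x) p.

Definition agree_below n k (x y : vtx n k) (m : nat) : bool :=
  [forall p : 'I_k, (p < m) ==> (letter x p == letter y p)].

Definition zero_from n k (x : vtx n k) (m : nat) : bool :=
  [forall p : 'I_k, (m <= p) ==> (letter x p == 0)].

Definition nonzero_from n k (x : vtx n k) (m : nat) : bool :=
  [forall p : 'I_k, (m <= p) ==> (letter x p != 0)].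

(* (R1): x_1..x_{k-1} x_k ~ x_1..x_{k-1} y_k with y_k <> x_k *)
Definition R1 n k (x y : vtx n k) : bool :=
  agree_below x y k.-1 && (letter x k.-1 != letter y k.-1).

(* (R2): for 0 <= i <= k-2 : x_1..x_i 0..0 ~ x_1..x_i x_{i+1}..x_k
   with x_j <> 0 for i+1 <= j <= k (1-indexed), i.e. 0-indexed positions >= i. *)
Definition R2 n k (x y : vtx n k) : bool :=
  [exists i : 'I_k, (i <= k - 2) &&
     [&& agree_below x y i, zero_from x i & nonzero_from y i]].

(* (R3): for 1 <= i <= k-1 : x_1..x_{i-1} x_i 0..0 ~ x_1..x_{i-1} y_i 0..0
   with x_i, y_i <> 0 and x_i <> y_i. Letter x_i is at 0-indexed position i-1. *)
Definition R3 n k (x y : vtx n k) : bool :=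
  [exists i : 'I_k, (1 <= i) &&
     [&& agree_below x y i.-1, zero_from x i, zero_from y i,
         letter x i.-1 != 0, letter y i.-1 != 0 &
         letter x i.-1 != letter y i.-1]].

Definition Hadj n k (x y : vtx n k) : bool :=
  (x != y) && [|| R1 x y, R1 y x, R2 x y, R2 y x, R3 x y | R3 y x].

Definition Hedges n k : {set {set vtx n k}} :=
  [set e : {set vtx n k} | [exists x, exists y, Hadj x y && (e == [set x; y])]].

(* Main.v *)
Require Import Defs.
From mathcomp Require Import all_boot all_order all_algebra.
From mathcomp Require Import zify ring.
Import GRing.Theory Num.Theory.


Definition all0 (s : seq nat) := all (fun x => x == 0) s.
Definition allnz (s : seq nat) := all (fun x => x != 0) s.

Definition sR1 k (s t : seq nat) := (take k.-1 s == take k.-1 t) && (nth 0 s k.-1 != nth 0 t k.-1).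
Definition sR2 k (s t : seq nat) := has (fun i => (i <= k - 2) && [&& take i s == take i t, all0 (drop i s) & allnz (drop i t)]) (iota 0 k).
Definition sR3 k (s t : seq nat) := has (fun i => (1 <= i) && [&& take i.-1 s == take i.-1 t, all0 (drop i s), all0 (drop i t), nth 0 s i.-1 != 0, nth 0 t i.-1 != 0 & nth 0 s i.-1 != nth 0 t i.-1]) (iota 0 k).
Definition sH k (s t : seq nat) := (s != t) && [|| sR1 k s t, sR1 k t s, sR2 k s t, sR2 k t s, sR3 k s t | sR3 k t s].

Lemma exists_has k (Q : nat -> bool) : [exists i : 'I_k, Q i] = has Q (iota 0 k).
Proof.
apply/existsP/hasP => [[i Hi]|[x]]; first by exists (val i); rewrite // mem_iota /= ltn_ord.
rewrite mem_iota /= => Hx HQ; by exists (Ordinal Hx).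
Qed.

Lemma agreeE n k (x y : vtx n k) m : agree_below x y m = (take m (map val x) == take m (map val y)).
Proof.
apply/forallP/eqP => [H|H p].
  apply: (@eq_from_nth _ 0); first by rewrite !size_take !size_map !size_tuple.
  move=> i; rewrite size_take size_map size_tuple => Hi.
  move: Hi; rewrite leq_min => /andP[Him Hik].
  rewrite !nth_take //; by move: (H (Ordinal Hik)) => /= /implyP /(_ Him) /eqP.
apply/implyP => Hp; move: (congr1 (fun s => nth 0 s p) H) => /=.
by rewrite /letter !nth_take // => ->.
Qed.

Lemma zeroE n k (x : vtx n k) m : zero_from x m = all0 (drop m (map val x)).
Proof.
apply/forallP/(all_nthP 0) => [H i|H p].
  rewrite size_drop size_map size_tuple => Hi.
  rewrite nth_drop; have Hk : m + i < k by lia.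
  by move: (H (Ordinal Hk)) => /= /implyP; apply; lia.
apply/implyP => Hp.
have Hi : p - m < size (drop m (map val x)) by rewrite size_drop size_map size_tuple; have := ltn_ord p; lia.
move: (H _ Hi); rewrite nth_drop subnKC //.
Qed.

Lemma nzE n k (x : vtx n k) m : nonzero_from x m = allnz (drop m (map val x)).
Proof.
apply/forallP/(all_nthP 0) => [H i|H p].
  rewrite size_drop size_map size_tuple => Hi.
  rewrite nth_drop; have Hk : m + i < k by lia.
  by move: (H (Ordinal Hk)) => /= /implyP; apply; lia.
apply/implyP => Hp.
have Hi : p - m < size (drop m (map val x)) by rewrite size_drop size_map size_tuple; have := ltn_ord p; lia.
move: (H _ Hi); rewrite nth_drop subnKC //.
Qed.

Lemma R1E n k (x y : vtx n k) : R1 x y = sR1 k (map val x) (map val y).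
Proof. by rewrite /R1 /sR1 agreeE. Qed.

Lemma R2E n k (x y : vtx n k) : R2 x y = sR2 k (map val x) (map val y).
Proof.
rewrite /R2 /sR2; apply/existsP/hasP => [[i Hi]|[j]].
  by exists (val i); rewrite ?mem_iota /= ?ltn_ord // -agreeE -zeroE -nzE.
rewrite mem_iota /= => Hj HQ; exists (Ordinal Hj); by rewrite agreeE zeroE nzE.
Qed.

Lemma R3E n k (x y : vtx n k) : R3 x y = sR3 k (map val x) (map val y).
Proof.
rewrite /R3 /sR3; apply/existsP/hasP => [[i Hi]|[j]].
  by exists (val i); rewrite ?mem_iota /= ?ltn_ord // -agreeE -!zeroE.
rewrite mem_iota /= => Hj HQ; exists (Ordinal Hj); by rewrite agreeE !zeroE.
Qed.

Lemma HadjE n k (x y : vtx n k) : Hadj x y = sH k (map val x) (map val y).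
Proof.
rewrite /Hadj /sH !R1E !R2E !R3E.
by rewrite (inj_eq (inj_map val_inj)) (inj_eq val_inj).
Qed.


Lemma has_iotaS (P : pred nat) k : has P (iota 0 k.+1) = P 0 || has (fun i => P i.+1) (iota 0 k).
Proof. by rewrite /= -[1]addn0 iotaDl has_map. Qed.

Lemma L1 k a b s t : sR1 k.+2 (a::s) (b::t) = (a==b) && sR1 k.+1 s t.
Proof. by rewrite /sR1 /= eqseq_cons andbA. Qed.

Lemma auxx (i k : nat) : (i < 0 + k.+2) -> (i < k.+3 - 2) = (i <= k.+2 - 2).
Proof. move=> H; apply/idP/idP; lia. Qed.

Lemma L2b a b s t : sR2 2 (a::s) (b::t) =
  ((a==0) && all0 s && (b!=0) && allnz t).
Proof. by rewrite /sR2 /= orbF !andbA. Qed.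

Lemma takeS (x : nat) s n : take n.+1 (x::s) = x :: take n s. Proof. by []. Qed.
Lemma dropS (x : nat) s n : drop n.+1 (x::s) = drop n s. Proof. by []. Qed.
Lemma nthS (x : nat) s n : nth 0 (x::s) n.+1 = nth 0 s n. Proof. by []. Qed.

Lemma L2 k a b s t : sR2 k.+3 (a::s) (b::t) =
  ((a==0) && all0 s && (b!=0) && allnz t) || ((a==b) && sR2 k.+2 s t).
Proof.
rewrite /sR2 has_iotaS; congr (_ || _).
  by rewrite take0 drop0 /= !andbA.
case Hab: (a == b); last first.
  by apply/hasP => -[i _]; rewrite takeS takeS eqseq_cons Hab /= andbF.
move/eqP: Hab => <-; rewrite andTb; apply: eq_in_has => i; rewrite mem_iota => Hi.
by rewrite takeS takeS eqseq_cons eqxx andTb !dropS auxx.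
Qed.

Lemma L3 k a b s t : sR3 k.+2 (a::s) (b::t) =
  ((a!=0) && (b!=0) && (a!=b) && all0 s && all0 t) || ((a==b) && sR3 k.+1 s t).
Proof.
rewrite /sR3 has_iotaS has_iotaS [in RHS]has_iotaS ltnn !andFb !orFb; congr (_ || _).
  rewrite take0 !dropS !drop0 /=.
  by case: (all0 s) (all0 t) (a != 0) (b != 0) (a != b) => [] [] [] [] [].
case Hab: (a == b); last first.
  by rewrite andFb; apply/hasP => -[i _]; rewrite [_.+2.-1]/= takeS takeS eqseq_cons Hab /= ?andbF.
move/eqP: Hab => <-; rewrite andTb; apply: eq_has => i.
by rewrite [_.+2.-1]/= [_.+1.-1]/= takeS takeS eqseq_cons eqxx andTb !dropS !nthS.
Qed.

Lemma sH_cons k a b s t : size s = k -> size t = k ->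
  sH k.+1 (a::s) (b::t) = if a == b then sH k s t else
   [|| (a==0) && (b!=0) && all0 s && allnz t,
       (b==0) && (a!=0) && all0 t && allnz s |
       (a!=0) && (b!=0) && all0 s && all0 t].
Proof.
case: k => [|[|k]] Hs Ht.
  move/size0nil: Hs => ->; move/size0nil: Ht => ->.
  rewrite /sH /sR1 /sR2 /sR3 /= /all0 /allnz /=.
  rewrite eqseq_cons andbT [b == a]eq_sym; case: (a =P b) => [->|Hab] /=; first by rewrite ?eqxx.
  case: (a =P 0) => Ha; case: (b =P 0) => Hb //=; by case: Hab; rewrite Ha Hb.
  case: s Hs => [|c []] // _; case: t Ht => [|d []] // _.
  rewrite /sH !L1 !L2b !L3 !eqseq_cons /sR1 /sR2 /sR3 /= /all0 /allnz /= !andbT.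
  rewrite [b == a]eq_sym [d == c]eq_sym.
  case: (a =P b) => Hab; case: (c =P d) => Hcd; case: (a =P 0) => Ha; case: (b =P 0) => Hb;
    case: (c =P 0) => Hc; case: (d =P 0) => Hd //=; congruence.
rewrite /sH !L1 !L2 !L3 !eqseq_cons.
case Hab: (a == b).
  move/eqP: Hab => <-; rewrite !eqxx /=.
  by case: (a == 0) => /=; rewrite ?andbF.
rewrite [b == a]eq_sym Hab /=.
by case: (a == 0); case: (b == 0); case: (all0 s); case: (all0 t); case: (allnz s); case: (allnz t).
Qed.


Lemma sum_cons n k (F : seq nat -> nat) :
  \sum_(x : k.+1.-tuple 'I_n) F (map val x) =
  \sum_(a < n) \sum_(u : k.-tuple 'I_n) F (val a :: map val u).
Proof.
rewrite pair_big /=.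
rewrite (reindex (fun p : 'I_n * k.-tuple 'I_n => [tuple of p.1 :: p.2])) //=.
exists (fun x : k.+1.-tuple 'I_n => (thead x, [tuple of behead x])) => [[a u] _|x _] /=.
  by congr (_, _); apply: val_inj.
by rewrite [RHS]tuple_eta; apply: val_inj.
Qed.

Lemma sum_prod (I J : finType) (f : I -> nat) (g : J -> nat) :
  \sum_i \sum_j f i * g j = (\sum_i f i) * (\sum_j g j).
Proof. by rewrite big_distrlr. Qed.

Lemma sum0_ord m : \sum_(a < m.+1) (val a == 0 : nat) = 1.
Proof. by rewrite big_ord_recl /= big1 // => i _; rewrite /= ?lift0. Qed.

Lemma sumnz_ord m : \sum_(a < m.+1) (val a != 0 : nat) = m.
Proof.
rewrite big_ord_recl /= (eq_bigr (fun => 1)) => [|i _]; last by rewrite /= ?lift0.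
by rewrite sum_nat_const card_ord muln1.
Qed.

Lemma Zcount m k : \sum_(u : k.-tuple 'I_m.+1) (all0 (map val u) : nat) = 1.
Proof.
elim: k => [|k IH].
  rewrite (eq_bigr (fun => 1)) => [|u _]; last by rewrite tuple0.
  by rewrite sum_nat_const card_tuple expn0.
rewrite (sum_cons _ _ (fun s : seq nat => nat_of_bool (all0 s))).
rewrite (eq_bigr (fun a : 'I_m.+1 => \sum_(u : k.-tuple 'I_m.+1) ((val a == 0 : nat) * (all0 (map val u) : nat)))) => [|a _].
  by rewrite sum_prod sum0_ord IH.
by apply: eq_bigr => u _; rewrite mulnb.
Qed.

Lemma Ncount m k : \sum_(u : k.-tuple 'I_m.+1) (allnz (map val u) : nat) = m ^ k.
Proof.
elim: k => [|k IH].
  rewrite (eq_bigr (fun => 1)) => [|u _]; last by rewrite tuple0.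
  by rewrite sum_nat_const card_tuple expn0.
rewrite (sum_cons _ _ (fun s : seq nat => nat_of_bool (allnz s))).
rewrite (eq_bigr (fun a : 'I_m.+1 => \sum_(u : k.-tuple 'I_m.+1) ((val a != 0 : nat) * (allnz (map val u) : nat)))) => [|a _].
  by rewrite sum_prod sumnz_ord IH expnS.
by apply: eq_bigr => u _; rewrite mulnb.
Qed.

Definition A n k := \sum_(x : vtx n k) \sum_(y : vtx n k) (sH k (map val x) (map val y) : nat).

Definition G (AK N a b : nat) := if a == b then AK else if a == 0 then N else if b == 0 then N else 1.

Lemma inner m k (a b : 'I_m.+1) :
  \sum_(u : k.-tuple 'I_m.+1) \sum_(v : k.-tuple 'I_m.+1) (sH k.+1 (val a :: map val u) (val b :: map val v) : nat)
  = G (A m.+1 k) (m ^ k) (val a) (val b).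
Proof.
under eq_bigr => u _ do under eq_bigr => v _ do rewrite sH_cons ?size_map ?size_tuple //.
rewrite /G; case: (val a =P val b) => Hab; first by [].
case: (val a =P 0) => Ha; case: (val b =P 0) => Hb /=.
- by case: Hab; rewrite Ha Hb.
- under eq_bigr => u _ do under eq_bigr => v _ do rewrite orbF -mulnb.
  by rewrite sum_prod Zcount Ncount mul1n.
- under eq_bigr => u _ do under eq_bigr => v _ do rewrite orbF -mulnb mulnC.
  by rewrite sum_prod Zcount Ncount muln1.
- under eq_bigr => u _ do under eq_bigr => v _ do rewrite -mulnb.
  by rewrite sum_prod !Zcount.
Qed.


Lemma sumG0 m AK N : \sum_(b < m.+1) G AK N 0 (val b) = AK + m * N.
Proof.
rewrite big_ord_recl /G /= (eq_bigr (fun => N)) => [|i _]; last by rewrite /= ?lift0.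
by rewrite sum_nat_const card_ord mulnC.
Qed.

Lemma sumGS m AK N i : i < m -> \sum_(b < m.+1) G AK N i.+1 (val b) = N + AK + (m - 1).
Proof.
move=> Hi; rewrite big_ord_recl /G /=.
rewrite (eq_bigr (fun j : 'I_m => if j == Ordinal Hi then AK else 1)) => [|j _]; last first.
  by rewrite /= ?lift0 eqSS eq_sym.
rewrite (bigD1 (Ordinal Hi)) //= eqxx -addnA; congr (_ + (_ + _)).
rewrite (eq_bigr (fun => 1)) => [|j /negbTE -> //].
by rewrite sum1_card cardC1 card_ord subn1.
Qed.

Lemma A_rec m k : A m.+1 k.+1 = m.+1 * A m.+1 k + 2 * m * m ^ k + m * (m - 1).
Proof.
rewrite [A _ k.+1]/A /vtx.
rewrite (sum_cons _ _ (fun s => \sum_(y : k.+1.-tuple 'I_m.+1) nat_of_bool (sH k.+1 s (map val y)))).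
under eq_bigr => a _ do under eq_bigr => u _ do
  rewrite (sum_cons _ _ (fun t => nat_of_bool (sH k.+1 (val a :: map val u) t))).
under eq_bigr => a _ do rewrite exchange_big.
under eq_bigr => a _ do under eq_bigr => b _ do rewrite inner.
rewrite big_ord_recl /= sumG0.
rewrite (eq_bigr (fun i : 'I_m => m ^ k + A m.+1 k + (m - 1)) ) => [|i _]; last first.
  by rewrite /= ?lift0 sumGS.
rewrite sum_nat_const card_ord.
set N := m ^ k; set M := m - 1; set Q := A m.+1 k; nia.
Qed.


Definition rk {T : finType} (x : T) : nat := enum_rank x.
Definition Plt {T : finType} (R : rel T) := [set p : T * T | R p.1 p.2 && (rk p.1 < rk p.2)].

Lemma edges_img (T : finType) (R : rel T) (Rsym : forall x y, R x y = R y x) (Rirr : forall x, R x x = false) : [set e : {set T} | [exists x, exists y, R x y && (e == [set x; y])]]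
  = (fun p : T * T => [set p.1; p.2]) @: Plt R.
Proof.
apply/setP => e; rewrite inE; apply/existsP/imsetP => [[x /existsP [y /andP [Rxy /eqP ->]]]|[[x y]]].
  case: (ltngtP (rk x) (rk y)) => H.
  - by exists (x, y) => //; rewrite inE /= Rxy H.
  - exists (y, x); first by rewrite inE /= -Rsym Rxy H.
    by rewrite /= setUC.
  - move: Rxy; have -> : x = y by apply: enum_rank_inj; apply: val_inj.
    by rewrite Rirr.
rewrite inE /= => /andP [Rxy _] ->; exists x; apply/existsP; exists y; by rewrite Rxy eqxx.
Qed.

Lemma edges_inj (T : finType) (R : rel T) : {in Plt R &, injective (fun p : T * T => [set p.1; p.2])}.
Proof.
move=> [x y] [x' y']; rewrite !inE /= => /andP [_ H1] /andP [_ H2] E.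
have Hx : x \in [set x'; y'] by rewrite -E set21.
have Hy : y \in [set x'; y'] by rewrite -E set22.
have Hx' : x' \in [set x; y] by rewrite E set21.
have Hy' : y' \in [set x; y] by rewrite E set22.
case/set2P: Hx => Ex; case/set2P: Hy => Ey; subst.
- lia.
- by [].
- move: H1 H2; lia.
- lia.
Qed.

Lemma edges_count (T : finType) (R : rel T) (Rsym : forall x y, R x y = R y x) (Rirr : forall x, R x x = false) : 2 * #|[set e : {set T} | [exists x, exists y, R x y && (e == [set x; y])]]|
  = \sum_x \sum_y (R x y : nat).
Proof.
rewrite (edges_img _ _ Rsym Rirr) card_in_imset; last exact: edges_inj.
rewrite pair_big /=.
have split : forall p : T * T, (R p.1 p.2 : nat) = (R p.1 p.2 && (rk p.1 < rk p.2)) + (R p.2 p.1 && (rk p.2 < rk p.1)).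
  move=> [x y] /=; rewrite [R y x]Rsym; case Rxy: (R x y) => //=.
  case: (ltngtP (rk x) (rk y)) => // Hr.
  move: Rxy; have -> : x = y by apply: enum_rank_inj; apply: val_inj.
  by rewrite Rirr.
rewrite (eq_bigr _ (fun p _ => split p)) big_split /=.
rewrite [X in _ + X](reindex_inj (h := fun p : T * T => (p.2, p.1))) /=; last first.
  by move=> [a b] [c d] /= [-> ->].
rewrite addnn -mul2n; congr (_ * _).
by rewrite -sum1_card big_mkcond /=; apply: eq_bigr => p _; rewrite inE; case: (_ && _).
Qed.


Lemma Hadj_sym n k (x y : vtx n k) : Hadj x y = Hadj y x.
Proof.
rewrite /Hadj eq_sym.
by case: (R1 x y) (R1 y x) (R2 x y) (R2 y x) (R3 x y) (R3 y x) => [] [] [] [] [] [];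
  rewrite ?andbT ?andbF.
Qed.

Lemma Hadj_irr n k (x : vtx n k) : Hadj x x = false.
Proof. by rewrite /Hadj eqxx. Qed.

Lemma edgesA n k : 2 * #|Hedges n k| = A n k.
Proof.
rewrite /Hedges (@edges_count _ _ (@Hadj_sym n k) (@Hadj_irr n k)) /A.
by apply: eq_bigr => x _; apply: eq_bigr => y _; rewrite HadjE.
Qed.

Lemma A0 n : A n 0 = 0.
Proof.
rewrite /A; apply: big1 => x _; apply: big1 => y _.
by rewrite (tuple0 x) (tuple0 y) /sH eqxx.
Qed.

Local Open Scope ring_scope.

Definition Fr (m k : nat) : rat :=
  3%:R / 2%:R * ((m.+1)%:R) ^+ k.+1 - ((m.+1)%:R - 1) ^+ k.+1 - 2%:R * ((m.+1)%:R) ^+ k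
    - (m.+1)%:R / 2%:R + 1.

Lemma natm1 (m : nat) : ((m * (m - 1))%N%:R : rat) = m%:R * (m%:R - 1).
Proof. case: m => [|m]; first by rewrite mul0r. by rewrite natrM subn1 /= mulrSr addrK. Qed.

Lemma A_closed m k : ((A m.+1 k)%:R : rat) = 2%:R * Fr m k.
Proof.
elim: k => [|k IH].
  by rewrite A0 /Fr; field.
rewrite A_rec !natrD natm1 !natrM IH natrX /Fr !exprS.
rewrite -!natr1 addrK; set a := (m%:R : rat); set b := (a + 1) ^+ k; set c := a ^+ k. by field.
Qed.

Theorem mainTheorem1 (n k : nat) (hn : (2 <= n)%N) (hk : (1 <= k)%N) :
  (#|Hedges n k|%:R : rat) =
    3%:R / 2%:R * (n%:R) ^+ k.+1 - (n%:R - 1) ^+ k.+1 - 2%:R * (n%:R) ^+ k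
    - n%:R / 2%:R + 1.
Proof.
case: n hn => [|[|m]] // _.
have H := congr1 (fun x : nat => (x%:R : rat)) (edgesA m.+2 k).
rewrite /= natrM A_closed in H.
change (#|Hedges m.+2 k|%:R = Fr m.+1 k).
apply: (@mulfI _ (2%:R : rat)) => //.
Qed.
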